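(* Let $x\in\mathbb X$ with $\mathcal R(x)=\inf\{\mathcal R(z):z\in\mathbb X,\ Az=Ax\}$. Then $$\varrho_1(x)=\inf\{\|\omega\|_{\mathbb Y}:\omega\in\mathbb Y,\ A^*\omega\in\partial\mathcal R(x)\}\quad(\inf\emptyset=\infty).$$ Moreover, if this quantity is finite and $x_\alpha\in R_\alpha(Ax)$, $\alpha>0$, is any selection, then $\frac1\alpha(Ax-Ax_\alpha)$ converges weakly in $\mathbb Y$ as $\alpha\searrow0$ to the unique $\omega\in\mathbb Y$ with $A^*\omega\in\partial\mathcal R(x)$ and $\|\omega\|_{\mathbb Y}=\varrho_1(x)$.
   Context: Standing setting: $\mathbb X$ real Banach space, $\tau$ a topology with $(\mathbb X,\tau)$ locally convex Hausdorff; $\mathcal R:\mathbb X\to(-\infty,\infty]$ proper convex with $\tau$-compact sublevel sets; $\mathbb Y$ real Hilbert space; $A:\mathbb X\to\mathbb Y$ linear, $\tau$-to-weak continuous. $T_\alpha(x,g):=\frac1{2\alpha}\|g-Ax\|_{\mathbb Y}^2+\mathcal R(x)$, $R_\alpha(g):=\operatorname{argmin}_{x\in\mathrm{dom}(\mathcal R)}T_\alpha(x,g)$, $\varrho_1(x):=\sup\{\alpha^{-1}\|Ax-Ax_\alpha\|_{\mathbb Y}:\alpha>0,x_\alpha\in R_\alpha(Ax)\}$. The notation $A^*\omega\in\partial\mathcal R(x)$ means $\mathcal R(z)\ge\mathcal R(x)+\langle\omega,A(z-x)\rangle_{\mathbb Y}$ for all $z\in\mathbb X$. *)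

(* Defs.v *)
From HB Require Import structures.
From mathcomp Require Import all_boot all_order all_algebra.
From mathcomp Require Import all_classical all_reals all_analysis.
Set Implicit Arguments. Unset Strict Implicit. Unset Printing Implicit Defensive.
Import Order.TTheory GRing.Theory Num.Theory.
Import numFieldNormedType.Exports.
Local Open Scope classical_set_scope.
Local Open Scope ring_scope.

Definition banach_norm (R : realType) (X : lmodType R) (N : X -> R) : Prop :=
  [/\ (forall x, N x = 0 <-> x = 0),
      (forall (a : R) x, N (a *: x) = `|a| * N x),
      (forall x y, N (x + y) <= N x + N y) &
      (forall u : nat -> X,
         (forall e : R, 0 < e -> exists n0 : nat,
             forall m n, (n0 <= m)%N -> (n0 <= n)%N -> N (u m - u n) < e) ->
         exists l : X, forall e : R, 0 < e -> exists n0 : nat,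
             forall n, (n0 <= n)%N -> N (u n - l) < e)].

(** [ip] is an inner product on the complete normed space [Y] inducing its
    norm; together with completeness of [Y] this makes [Y] a real Hilbert space. *)
Definition hilbert_inner (R : realType) (Y : normedModType R)
  (ip : Y -> Y -> R) : Prop :=
  [/\ (forall x y, ip x y = ip y x),
      (forall (a : R) x y z, ip (a *: x + y) z = a * ip x z + ip y z) &
      (forall x, ip x x = `|x| ^+ 2)].

Definition proper_convex (R : realType) (X : lmodType R) (F : X -> \bar R) : Prop :=
  [/\ (forall x, F x != -oo%E),
      (exists x, (F x < +oo)%E) &
      (forall x y (t : R), 0 < t < 1 ->
         (F (t *: x + (1 - t) *: y)%R <= t%:E * F x + (1 - t)%:E * F y)%E)].

Definition dom (R : realType) (X : Type) (F : X -> \bar R) : set X :=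
  [set x | (F x < +oo)%E].

Definition Tik (R : realType) (X : lmodType R) (Y : normedModType R)
  (A : X -> Y) (Reg : X -> \bar R) (alpha : R) (x : X) (g : Y) : \bar R :=
  ((2 * alpha)^-1 * `|g - A x| ^+ 2)%:E + Reg x.

Definition Ralpha (R : realType) (X : lmodType R) (Y : normedModType R)
  (A : X -> Y) (Reg : X -> \bar R) (alpha : R) (g : Y) : set X :=
  [set x | dom Reg x /\
     forall z, dom Reg z -> (Tik A Reg alpha x g <= Tik A Reg alpha z g)%E].

Definition rho1 (R : realType) (X : lmodType R) (Y : normedModType R)
  (A : X -> Y) (Reg : X -> \bar R) (x : X) : \bar R :=
  ereal_sup [set r : \bar R | exists (alpha : R) (xa : X),
     [/\ 0 < alpha, Ralpha A Reg alpha (A x) xa &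
          r = (alpha^-1 * `|A x - A xa|)%:E]].

(** A^* omega \in \partial Reg(x). *)
Definition adj_subgrad (R : realType) (X : lmodType R) (Y : normedModType R)
  (ip : Y -> Y -> R) (A : X -> Y) (Reg : X -> \bar R) (x : X) (w : Y) : Prop :=
  forall z, (Reg z >= Reg x + (ip w (A (z - x)))%:E)%E.

(* Main.v *)
Require Import Defs.
From HB Require Import structures.
From mathcomp Require Import all_boot all_order all_algebra.
From mathcomp Require Import all_classical all_reals all_analysis.
From mathcomp Require Import ring lra.
Import Order.TTheory GRing.Theory Num.Theory.
Import numFieldNormedType.Exports.
Local Open Scope classical_set_scope.
Local Open Scope ring_scope.
Set Implicit Arguments. Unset Strict Implicit.
Section Hilb.
Variables (R : realType) (Y : normedModType R) (ip : Y -> Y -> R).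
Hypothesis hip : hilbert_inner ip.

Lemma ipC x y : ip x y = ip y x. Proof. by case: hip. Qed.
Lemma ipDl x y z : ip (x + y) z = ip x z + ip y z.
Proof. by case: hip => _ h _; have := h 1 x y z; rewrite scale1r mul1r. Qed.
Lemma ip0l z : ip 0 z = 0.
Proof.
case: hip => _ h _; have := h 1 0 0 z; rewrite scale1r addr0 mul1r; lra.
Qed.
Lemma ipZl a x z : ip (a *: x) z = a * ip x z.
Proof. by case: hip => _ h _; have := h a x 0 z; rewrite addr0 ip0l addr0. Qed.
Lemma ipNl x z : ip (- x) z = - ip x z.
Proof. by rewrite -scaleN1r ipZl mulN1r. Qed.
Lemma ipBl x y z : ip (x - y) z = ip x z - ip y z.
Proof. by rewrite ipDl ipNl. Qed.
Lemma ipDr x y z : ip z (x + y) = ip z x + ip z y.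
Proof. by rewrite ipC ipDl ipC (ipC y). Qed.
Lemma ipZr a x z : ip z (a *: x) = a * ip z x.
Proof. by rewrite ipC ipZl ipC. Qed.
Lemma ipNr x z : ip z (- x) = - ip z x.
Proof. by rewrite ipC ipNl ipC. Qed.
Lemma ipBr x y z : ip z (x - y) = ip z x - ip z y.
Proof. by rewrite ipDr ipNr. Qed.
Lemma ip0r z : ip z 0 = 0.
Proof. by rewrite ipC ip0l. Qed.
Lemma ipxx x : ip x x = `|x| ^+ 2. Proof. by case: hip. Qed.

Lemma normB2 x y : `|x - y| ^+ 2 = `|x| ^+ 2 - 2 * ip x y + `|y| ^+ 2.
Proof. rewrite -!ipxx ipBl !ipBr (ipC y x); ring. Qed.

Lemma ip_le x y : ip x y <= `|x| * `|y|.
Proof.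
have [->|x0] := eqVneq x 0; first by rewrite ip0l normr0 mul0r.
have [->|y0] := eqVneq y 0; first by rewrite ip0r normr0 mulr0.
have := normB2 (`|y| *: x) (`|x| *: y).
rewrite ipZl ipZr !normrZ !normr_id => h.
have h0 : 0 <= `| `|y| *: x - `|x| *: y| ^+ 2 by rewrite exprn_ge0.
rewrite h in h0.
have px : 0 < `|x| by rewrite normr_gt0.
have py : 0 < `|y| by rewrite normr_gt0.
have pxy : 0 < `|x| * `|y| by rewrite mulr_gt0.
nra.
Qed.

Lemma ip_abs x y : `|ip x y| <= `|x| * `|y|.
Proof.
have h1 := ip_le x y; have h2 := ip_le (-x) y; rewrite ipNl normrN in h2.
rewrite ler_norml; apply/andP; split; lra.
Qed.
End Hilb.

Lemma small_t (R : realType) (c M : R) : 0 <= M ->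
  (forall t, 0 < t < 1 -> 0 <= c + t * M) -> 0 <= c.
Proof.
move=> M0 h; rewrite leNgt; apply/negP => c0.
pose t := (- c) / (2 * (M - c)).
have Mc : 0 < M - c by lra.
have t0 : 0 < t by rewrite /t divr_gt0 // ?oppr_gt0 // mulr_gt0.
have ht : t * (2 * (M - c)) = - c by rewrite /t mulfVK // gt_eqF // mulr_gt0.
have t1 : t < 1 by nra.
have := h t; rewrite t0 t1 => /(_ isT); nra.
Qed.

Section Main.
Variables (R : realType) (X : tvsType R) (Reg : X -> \bar R)
  (Y : normedModType R) (ip : Y -> Y -> R) (A : {linear X -> Y}).
Hypothesis hip : hilbert_inner ip.
Hypothesis hReg : proper_convex Reg.

Lemma optim (g : Y) a xa : 0 < a -> Ralpha A Reg a g xa ->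
  adj_subgrad ip A Reg xa (a^-1 *: (g - A xa)).
Proof.
move=> a0 [dxa hmin] z.
case: hReg => hN _ hC.
move: (hN xa) dxa; rewrite /dom /=.
case E0: (Reg xa) => [r0| |] // _ _.
case E1: (Reg z) => [r1| |]; last by have := hN z; rewrite E1.
  2: by rewrite leey.
set d := g - A xa; set e := A z - A xa.
rewrite [A (z - xa)]linearB /= -/e -EFinD lee_fin (ipZl hip).
set k := a^-1.
have k0 : 0 < k by rewrite invr_gt0.
have hk : (2 * a)^-1 = k / 2 by rewrite invfM mulrC.
rewrite -subr_ge0; apply: (@small_t _ _ (k / 2 * `|e| ^+ 2)); first by rewrite mulr_ge0 ?exprn_ge0 // divr_ge0 // ltW.
move=> t /andP[t0 t1].
have hc := hC z xa t; rewrite t0 t1 /= E0 E1 in hc; have {}hc := hc isT.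
set zt := t *: z + (1 - t) *: xa in hc.
have dzt : (Reg zt < +oo)%E.
  apply: le_lt_trans hc _; rewrite -!EFinM -EFinD; exact: ltry.
have hm := hmin zt dzt; rewrite /Tik E0 in hm.
move: hc hm; case Ezt: (Reg zt) => [rt| |]; [|by rewrite leye_eq|by have := hN zt; rewrite Ezt].
rewrite -!EFinM -!EFinD !lee_fin => hc hm.
have hAzt : g - A zt = d - t *: e.
  rewrite /zt linearD !linearZ /= /d /e.
  rewrite scalerBl scale1r scalerN scalerBr opprD opprB opprB -!addrA; congr (_ + _).
  by rewrite addrCA [in RHS]addrCA; congr (_ + _); exact: addrC.
rewrite -/d hAzt (normB2 hip d (t *: e)) (ipZr hip) normrZ gtr0_norm // hk in hm.
rewrite exprMn -/d in hm.
set P := ip d e in hm *; set D := `|d| ^+ 2 in hm; set E2 := `|e| ^+ 2 in hm *.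
have E20 : 0 <= E2 by rewrite exprn_ge0.
have h : 0 <= t * (r1 - (r0 + k * P) + t * (k / 2 * E2)) by nra.
by rewrite pmulr_rge0 in h.
Qed.

Lemma mono p q w1 w2 rp rq : Reg p = rp%:E -> Reg q = rq%:E ->
  adj_subgrad ip A Reg p w1 -> adj_subgrad ip A Reg q w2 ->
  0 <= ip (w1 - w2) (A p - A q).
Proof.
move=> Ep Eq H1 H2; have := H1 q; have := H2 p.
rewrite Ep Eq -!EFinD !lee_fin !linearB /= => h2 h1.
rewrite (ipBl hip); rewrite -(opprB (A p) (A q)) !(ipNr hip) in h1 h2; lra.
Qed.

Lemma pair_ineq (a1 a2 : R) (u v : Y) : 0 <= a2 -> a2 < a1 ->
  0 <= ip (u - v) (a2 *: v - a1 *: u) ->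
  `|u| <= `|v| /\ `|u - v| ^+ 2 <= `|v| ^+ 2 - `|u| ^+ 2.
Proof.
move=> a20 a21 h.
rewrite (ipBl hip) !(ipBr hip) !(ipZr hip) !(ipxx hip) (ipC hip v u) in h.
have cs := ip_le hip u v.
set P := ip u v in h cs; set nu := `|u| in h cs *; set nv := `|v| in h cs *.
have nu0 : 0 <= nu by rewrite normr_ge0.
have nv0 : 0 <= nv by rewrite normr_ge0.
have le1 : nu <= nv.
  rewrite leNgt; apply/negP => lt.
  have : (a1 + a2) * P <= (a1 + a2) * (nu * nv) by rewrite ler_pM2l //; lra.
  have f1 : 0 < a1 * nu - a2 * nv.
    have : a2 * nv <= a2 * nu by rewrite ler_wpM2l //; lra.
    have : a2 * nu < a1 * nu by rewrite ltr_pM2r //; lra.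
    lra.
  have f2 : 0 < (a1 * nu - a2 * nv) * (nu - nv) by rewrite mulr_gt0 // subr_gt0.
  nra.
split => //.
have hP : nu ^+ 2 <= P.
  have : (a1 + a2) * nu ^+ 2 <= (a1 + a2) * P.
    have s1 : nu ^+ 2 <= nv ^+ 2 by rewrite lerXn2r // ?nnegrE.
    have : a2 * nu ^+ 2 <= a2 * nv ^+ 2 by rewrite ler_wpM2l.
    lra.
  by rewrite ler_pM2l //; lra.
rewrite (normB2 hip) -/nu -/nv -/P; lra.
Qed.
End Main.

Lemma near0P (R : realType) (P : R -> Prop) :
  (\forall t \near 0^'+, P t) <-> exists2 d : R, 0 < d & forall t, 0 < t < d -> P t.
Proof.
split.
- move=> /nbhs_ballP [d /= d0 hd]; exists d => // t /andP[t0 td].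
  apply: hd => //=; rewrite /ball /= sub0r normrN gtr0_norm //.
- move=> [d d0 hd]; apply/nbhs_ballP; exists d => // t /=.
  rewrite /ball /= sub0r normrN => h t0; apply: hd; rewrite t0 /=.
  by rewrite gtr0_norm in h.
Qed.

Lemma cluster_real (R : realType) (T : topologicalType) (K : set T) (S : R -> set T) :
  compact K -> (forall d, 0 < d -> S d !=set0) -> (forall d, 0 < d -> S d `<=` K) ->
  (forall d1 d2, 0 < d1 -> d1 <= d2 -> S d1 `<=` S d2) ->
  exists2 p, K p & forall d (U : set T), 0 < d -> nbhs p U -> (S d `&` U) !=set0.
Proof.
move=> cK ne sK inc.
have FF : Filter (filter_from [set d | 0 < d] S).
  apply: filter_from_filter; first by exists 1; rewrite /= ltr01.
  move=> i j /= i0 j0; exists (Order.min i j); first by rewrite /= lt_min i0 j0.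
  move=> y Sy; split.
    by apply: (inc (Order.min i j) i) => //; rewrite ?lt_min ?i0 ?j0 // ge_min lexx.
  by apply: (inc (Order.min i j) j) => //; rewrite ?lt_min ?i0 ?j0 // ge_min lexx orbT.
have PF : ProperFilter (filter_from [set d | 0 < d] S).
  by apply: filter_from_proper => i i0; exact: ne.
have FK : filter_from [set d | 0 < d] S K by exists 1; [rewrite /= ltr01|exact: sK; rewrite ltr01].
have [p [Kp cp]] := cK _ PF FK.
exists p => // d U d0 pU; apply: cp => //; by exists d.
Qed.

Lemma cvg_ip (R : realType) (Y : normedModType R) (ip : Y -> Y -> R)
  (hip : hilbert_inner ip) (T : Type) (F : set_system T) (FF : Filter F)
  (f : T -> Y) (l v : Y) :
  f @ F --> l -> (fun t => ip (f t) v) @ F --> ip l v.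
Proof.
move=> /cvgrPdist_lt h; apply/cvgrPdist_lt => e e0.
have e1 : 0 < e / (`|v| + 1) by rewrite divr_gt0 // ltr_pwDr // normr_ge0.
near=> t.
rewrite -(ipBl hip); apply: le_lt_trans (ip_abs hip _ _) _.
have h1 : `|l - f t| < e / (`|v| + 1) by near: t; exact: h.
have v0 : 0 <= `|v| by [].
have ht : `|l - f t| * (`|v| + 1) < e by rewrite -ltr_pdivlMr // ltr_pwDr.
have : `|l - f t| * `|v| <= `|l - f t| * (`|v| + 1) by rewrite ler_wpM2l // lerDl.
lra.
Unshelve. all: by end_near.
Qed.

Section Core.
Variables (R : realType) (X : tvsType R) (Reg : X -> \bar R)
  (Y : completeNormedModType R) (ip : Y -> Y -> R) (A : {linear X -> Y})
  (x : X) (xa : R -> X) (rho : R).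
Hypothesis hip : hilbert_inner ip.
Hypothesis hReg : proper_convex Reg.
Hypothesis hcpt : forall c : R, compact [set z : X | (Reg z <= c%:E)%E].
Hypothesis hAcont : forall v : Y, continuous (fun z : X => ip (A z) v).
Hypothesis hx : Reg x = ereal_inf [set Reg z | z in [set z : X | A z = A x]].
Hypothesis hxa : forall a, 0 < a -> Ralpha A Reg a (A x) (xa a).

Definition om (a : R) : Y := a^-1 *: (A x - A (xa a)).

Hypothesis hrho : forall a, 0 < a -> `|om a| <= rho.

Lemma AxaE a : 0 < a -> A (xa a) = A x - a *: om a.
Proof.
by move=> a0; rewrite /om scalerA mulfV ?gt_eqF // scale1r opprB addrC subrK.
Qed.

Lemma finxa a : 0 < a -> exists r, Reg (xa a) = r%:E.
Proof.
move=> a0; have [+ _] := hxa a0; rewrite /dom /=; case: hReg => hN _ _.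
move: (hN (xa a)); case: (Reg (xa a)) => [r| |] //; by exists r.
Qed.

Lemma sub_om a : 0 < a -> adj_subgrad ip A Reg (xa a) (om a).
Proof. by move=> a0; apply: (optim hip hReg a0 (hxa a0)). Qed.

Lemma mono_om a b : 0 < b -> b < a ->
  `|om a| <= `|om b| /\ `|om a - om b| ^+ 2 <= `|om b| ^+ 2 - `|om a| ^+ 2.
Proof.
move=> b0 ba; have a0 : 0 < a by apply: lt_trans ba.
have [ra Ea] := finxa a0; have [rb Eb] := finxa b0.
have h := mono hip Ea Eb (sub_om a0) (sub_om b0).
rewrite (AxaE a0) (AxaE b0) in h.
have e : A x - a *: om a - (A x - b *: om b) = b *: om b - a *: om a.
  by rewrite opprB addrC addrA subrK.
rewrite e in h; have := @pair_ineq R Y ip hip _ _ _ _ (ltW b0) ba h; exact.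
Qed.

Lemma has_sup_S : has_sup [set `|om a| ^+ 2 | a in [set a : R | 0 < a]].
Proof.
split; first by exists (`|om 1| ^+ 2), 1 => //=; rewrite ltr01.
exists (rho ^+ 2) => _ [a /= a0 <-].
by rewrite lerXn2r // ?nnegrE ?hrho // (le_trans _ (hrho a0)).
Qed.

Lemma cauchy_om e : 0 < e -> exists2 d, 0 < d &
  forall a b, 0 < a < d -> 0 < b < d -> `|om a - om b| < e.
Proof.
move=> e0.
have [_ [a0 /= a00 <-] ha0] := sup_adherent (mulr_gt0 e0 e0) has_sup_S.
set s := sup _ in ha0.
have ub a : 0 < a -> `|om a| ^+ 2 <= s.
  by move=> ap; apply: (sup_upper_bound has_sup_S); exists a.
have key a b : 0 < b -> b < a -> a < a0 -> `|om a - om b| < e.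
  move=> b0 ba aa0.
  have [_ h1] := mono_om b0 ba.
  have [h2 _] := mono_om (lt_trans b0 ba) aa0.
  have h3 := ub _ b0.
  have h4 : `|om a0| ^+ 2 <= `|om a| ^+ 2 by rewrite lerXn2r // ?nnegrE.
  have h5 : `|om a - om b| ^+ 2 < e * e by lra.
  rewrite ltNge; apply/negP => h6.
  have : e * e <= `|om a - om b| ^+ 2 by rewrite expr2 ler_pM // ltW.
  lra.
exists a0 => // a b /andP[a0p aa0] /andP[b0p ba0].
case: (ltgtP a b) => [ab|ba|->].
- by rewrite distrC; apply: key.
- exact: key.
- by rewrite subrr normr0.
Qed.

Lemma cvg_om : cvg (om @ 0^'+).
Proof.
apply: cauchy_cvg; apply: cauchy_exP => eps eps0.
have [d d0 hd] := cauchy_om eps0.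
exists (om (d / 2)); apply/near0P; exists d => // t /andP[t0 td].
have d2 : 0 < d / 2 < d by apply/andP; split; [rewrite divr_gt0|rewrite ltr_pdivrMr // ltr_pMr // ltr1n].
by have := hd _ t d2; rewrite t0 td /= => /(_ isT); rewrite -ball_normE.
Qed.

Definition w_lim := lim (om @ 0^'+).

Lemma hom : om @ 0^'+ --> w_lim.
Proof. exact: cvg_om. Qed.

Lemma rho0 : 0 <= rho.
Proof. exact: le_trans (normr_ge0 _) (hrho ltr01). Qed.

Lemma om_le_w a : 0 < a -> `|om a| <= `|w_lim|.
Proof.
move=> a0; apply: (cvgr_to_ge (cvg_norm hom)); apply/near0P; exists a => //.
by move=> t /andP[t0 ta]; have [] := mono_om t0 ta.
Qed.

Lemma lim_low c : (forall d, 0 < d -> exists a, 0 < a < d /\ (Reg (xa a) <= c%:E)%E) ->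
  (Reg x <= c%:E)%E.
Proof.
move=> H.
pose S d := [set z | exists a, [/\ 0 < a < d, (Reg (xa a) <= c%:E)%E & z = xa a]].
have s1 : forall d, 0 < d -> S d !=set0.
  move=> d d0; have [a [ha hc]] := H d d0; by exists (xa a), a.
have s2 : forall d, 0 < d -> S d `<=` [set z | (Reg z <= c%:E)%E].
  by move=> d d0 z [a [_ hc ->]].
have s3 : forall d1 d2, 0 < d1 -> d1 <= d2 -> S d1 `<=` S d2.
  move=> d1 d2 d10 d12 z [a [/andP[a0 ad] hc ->]]; exists a; split => //.
  by rewrite a0 (lt_le_trans ad d12).
have [p Kp hp] := cluster_real (@hcpt c) s1 s2 s3.
have Ap : A p = A x.
  set u := A p - A x.
  suff h : `|u| ^+ 2 <= 0.
    apply/eqP; rewrite -subr_eq0 -/u -normr_eq0; apply/eqP.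
    have := normr_ge0 u; nra.
  apply/ler_addgt0Pr => eta eta0; rewrite add0r.
  have := @hAcont u p; move/cvgrPdist_lt => /(_ (eta / 2)) hn.
  have eta2 : 0 < eta / 2 by rewrite divr_gt0.
  have {}hn := hn eta2.
  have K0 : 0 < rho * `|u| + 1 by rewrite ltr_pwDr // mulr_ge0 // rho0.
  set delta := eta / 2 / (rho * `|u| + 1).
  have delta0 : 0 < delta by rewrite divr_gt0.
  have [z [[a [/andP[a0 ad] _ ->]] Uz]] := hp delta _ delta0 hn.
  move: Uz => /=; rewrite (AxaE a0) (ipBl hip) (ipZl hip).
  have hu : `|u| ^+ 2 = ip (A p) u - ip (A x) u by rewrite -(ipxx hip) /u (ipBl hip).
  have h1 : `|ip (om a) u| <= rho * `|u|.
    apply: le_trans (ip_abs hip _ _) _; rewrite ler_wpM2r //; exact: hrho.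
  have h2 : a * (rho * `|u| + 1) < eta / 2.
    by rewrite -ltr_pdivlMr.
  have h3 : 0 <= rho * `|u| by rewrite mulr_ge0 // rho0.
  have h4 : a * `|ip (om a) u| <= a * (rho * `|u| + 1).
    by rewrite ler_wpM2l ?(ltW a0) //; lra.
  rewrite ltr_norml => /andP[h5 h6].
  have hI : - `|ip (om a) u| <= ip (om a) u by rewrite lerNl -normrN ler_norm.
  have := ler_wpM2l (ltW a0) hI; rewrite mulrN => h7.
  lra.
rewrite hx; apply: le_trans _ Kp; apply: ereal_inf_lbound; by exists p.
Qed.

Lemma finx : exists r, Reg x = r%:E.
Proof.
case: hReg => hN [z0 hz0] _.
have [r0 E0] : exists r0, Reg z0 = r0%:E.
  move: (hN z0) hz0; case: (Reg z0) => [r| |] // _ _; by exists r.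
suff h : (Reg x <= (r0 + rho * (`|A z0 - A x| + rho))%:E)%E.
  move: (hN x) h; case: (Reg x) => [r| |] // _ _; by exists r.
apply: lim_low => d d0.
set a := Order.min d 1 / 2.
have m0 : 0 < Order.min d 1 by rewrite lt_min d0 ltr01.
have a0 : 0 < a by rewrite divr_gt0.
have ad : a < Order.min d 1 by rewrite /a ltr_pdivrMr // ltr_pMr // ltr1n.
have a1 : a <= 1 by apply: ltW; apply: (lt_le_trans ad); rewrite ge_min lexx orbT.
exists a; split.
  by rewrite a0 /=; apply: (lt_le_trans ad); rewrite ge_min lexx.
have [ra Ea] := finxa a0; rewrite Ea lee_fin.
have := sub_om a0 z0; rewrite E0 Ea -EFinD lee_fin [A (z0 - _)]linearB /=.
rewrite (AxaE a0).
have e : A z0 - (A x - a *: om a) = (A z0 - A x) + a *: om a.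
  by rewrite opprB addrCA addrC.
rewrite e => h.
have h1 := ip_abs hip (om a) (A z0 - A x + a *: om a).
have h2 : `|A z0 - A x + a *: om a| <= `|A z0 - A x| + rho.
  apply: le_trans (ler_normD _ _) _; rewrite lerD2l normrZ gtr0_norm //.
  have := hrho a0; have := normr_ge0 (om a); nra.
have h3 : `|om a| * `|A z0 - A x + a *: om a| <= rho * (`|A z0 - A x| + rho).
  exact: ler_pM (normr_ge0 _) (normr_ge0 _) (hrho a0) h2.
move: h1; rewrite ler_norml => /andP[h4 _].
lra.
Qed.

Lemma liminf r : Reg x = r%:E -> forall e, 0 < e ->
  exists2 d, 0 < d & forall a, 0 < a < d -> ((r - e)%:E < Reg (xa a))%E.
Proof.
move=> Er e e0; apply: contrapT => H.
have : (Reg x <= (r - e)%:E)%E.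
  apply: lim_low => d d0; apply: contrapT => H2; apply: H; exists d => // a ha.
  rewrite ltNge; apply/negP => h; apply: H2; exists a; split => //.
rewrite Er lee_fin; lra.
Qed.

Lemma sub_w : adj_subgrad ip A Reg x w_lim.
Proof.
move=> z; have [r Er] := finx; case: hReg => hN _ _.
case Ez: (Reg z) => [rz| |]; last by have := hN z; rewrite Ez.
  2: by rewrite leey.
rewrite Er -EFinD lee_fin [A (z - x)]linearB /=.
apply/ler_addgt0Pr => e e0.
have e2 : 0 < e / 2 by rewrite divr_gt0.
have [d1 d10 h1] := liminf Er e2.
set K := `|A z - A x| + 1.
have K0 : 0 < K by rewrite ltr_pwDr // normr_ge0.
have eK : 0 < e / 2 / K by rewrite divr_gt0.
have := hom; move/cvgrPdist_lt => /(_ _ eK) /near0P [d2 d20 h2].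
set a := Order.min d1 d2 / 2.
have m0 : 0 < Order.min d1 d2 by rewrite lt_min d10 d20.
have a0 : 0 < a by rewrite divr_gt0.
have ad : a < Order.min d1 d2 by rewrite /a ltr_pdivrMr // ltr_pMr // ltr1n.
have ad1 : 0 < a < d1 by rewrite a0 /=; apply: (lt_le_trans ad); rewrite ge_min lexx.
have ad2 : 0 < a < d2 by rewrite a0 /=; apply: (lt_le_trans ad); rewrite ge_min lexx orbT.
have {h1} h1 := h1 _ ad1; have {h2} h2 := h2 _ ad2.
have [ra Ea] := finxa a0; rewrite Ea lte_fin in h1.
have := sub_om a0 z; rewrite Ez Ea -EFinD lee_fin [A (z - _)]linearB /= (AxaE a0).
have e1 : A z - (A x - a *: om a) = (A z - A x) + a *: om a.
  by rewrite opprB addrCA addrC.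
rewrite e1 (ipDr hip) (ipZr hip) (ipxx hip) => h.
have h3 : 0 <= a * `|om a| ^+ 2 by rewrite mulr_ge0 ?exprn_ge0 // ltW.
have h4 : ip (om a) (A z - A x) = ip w_lim (A z - A x) - ip (w_lim - om a) (A z - A x).
  rewrite (ipBl hip); lra.
have h5 := ip_abs hip (w_lim - om a) (A z - A x).
have h6 : `|w_lim - om a| * `|A z - A x| <= e / 2.
  have : `|w_lim - om a| * `|A z - A x| <= e / 2 / K * K.
    apply: (ler_pM (normr_ge0 _) (normr_ge0 _) (ltW h2)); by rewrite /K lerDl.
  by rewrite divfK // gt_eqF.
move: h5; rewrite ler_norml => /andP[h7 h8].
lra.
Qed.
End Core.

Section Exist.
Variables (R : realType) (X : tvsType R) (Reg : X -> \bar R)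
  (Y : normedModType R) (ip : Y -> Y -> R) (A : {linear X -> Y}).
Hypothesis hip : hilbert_inner ip.
Hypothesis hausX : hausdorff_space X.
Hypothesis hReg : proper_convex Reg.
Hypothesis hcpt : forall c : R, compact [set z : X | (Reg z <= c%:E)%E].
Hypothesis hAcont : forall v : Y, continuous (fun z : X => ip (A z) v).
Variables (g : Y) (a : R).
Hypothesis a0 : 0 < a.

Lemma lsc_q p eps : 0 < eps ->
  \forall z \near p, `|g - A p| ^+ 2 - eps < `|g - A z| ^+ 2.
Proof.
move=> e0; set u := g - A p.
have := @hAcont u p; move/cvgrPdist_lt => /(_ (eps / 2)) hn.
have e2 : 0 < eps / 2 by rewrite divr_gt0.
apply: filterS (hn e2) => z /= hz.
have h1 := normB2 hip (g - A z) u.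
have h2 : 0 <= `|g - A z - u| ^+ 2 by rewrite exprn_ge0.
rewrite h1 (ipBl hip) in h2.
have hu : `|u| ^+ 2 = ip g u - ip (A p) u by rewrite -(ipxx hip) /u (ipBl hip).
move: hz; rewrite ltr_norml => /andP[h3 h4].
lra.
Qed.

Lemma lsc_R p rp eps : Reg p = rp%:E -> 0 < eps ->
  \forall z \near p, ((rp - eps)%:E < Reg z)%E.
Proof.
move=> Ep e0.
have cl : closed [set z | (Reg z <= (rp - eps)%:E)%E].
  exact: compact_closed hausX (@hcpt (rp - eps)).
have op : open (~` [set z | (Reg z <= (rp - eps)%:E)%E]) by rewrite openC.
have Cp : (~` [set z | (Reg z <= (rp - eps)%:E)%E]) p.
  by rewrite /= Ep lee_fin; lra.
apply: filterS (open_nbhs_nbhs (conj op Cp)) => z /= hz.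
by rewrite ltNge; apply/negP.
Qed.

Let T z := Tik A Reg a z g.

Lemma RleT z : (Reg z <= T z)%E.
Proof.
rewrite /T /Tik; apply: leeDr.
by rewrite lee_fin mulr_ge0 ?exprn_ge0 // invr_ge0 mulr_ge0 // ltW.
Qed.

Lemma exist_gen (th : R -> R) c1 :
  (forall d, 0 < d -> exists z, dom Reg z /\ (T z < (th d)%:E)%E) ->
  (forall d, 0 < d -> th d <= c1) ->
  (forall d1 d2, 0 < d1 -> d1 <= d2 -> th d1 <= th d2) ->
  exists p, dom Reg p /\ forall d, 0 < d -> (T p <= (th d)%:E)%E.
Proof.
move=> ne bd mo; case: hReg => hN _ _.
pose S d := [set z | dom Reg z /\ (T z < (th d)%:E)%E].
have s1 : forall d, 0 < d -> S d !=set0.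
  by move=> d d0; have [z hz] := ne d d0; exists z.
have s2 : forall d, 0 < d -> S d `<=` [set z | (Reg z <= c1%:E)%E].
  move=> d d0 z [_ hz] /=; apply: le_trans (RleT z) _.
  by apply: le_trans (ltW hz) _; rewrite lee_fin bd.
have s3 : forall d1 d2, 0 < d1 -> d1 <= d2 -> S d1 `<=` S d2.
  move=> d1 d2 d10 d12 z [dz hz]; split => //.
  by apply: lt_le_trans hz _; rewrite lee_fin mo.
have [p Kp hp] := cluster_real (@hcpt c1) s1 s2 s3.
have [rp Ep] : exists rp, Reg p = rp%:E.
  move: (hN p) Kp => /=; case: (Reg p) => [r| |] // _ _; by exists r.
exists p; split; first by rewrite /dom /= Ep ltry.
move=> d d0; rewrite /T /Tik Ep -EFinD lee_fin.
set k := (2 * a)^-1.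
have k0 : 0 < k by rewrite invr_gt0 mulr_gt0.
apply/ler_addgt0Pr => e e0.
set eps := e / (k + 1).
have eps0 : 0 < eps by rewrite divr_gt0 // addr_gt0.
have hU := @filterI _ _ (nbhs_filter p) _ _ (lsc_q p eps0) (lsc_R Ep eps0).
have [z [[dz hz] [hz1 hz2]]] := hp d _ d0 hU.
have [rz Ez] : exists rz, Reg z = rz%:E.
  move: (hN z) dz; rewrite /dom /=; case: (Reg z) => [r| |] // _ _; by exists r.
rewrite /T /Tik Ez -EFinD lte_fin -/k in hz.
rewrite Ez lte_fin in hz2.
have h1 : k * (`|g - A p| ^+ 2 - eps) < k * `|g - A z| ^+ 2 by rewrite ltr_pM2l.
have h2 : eps * (k + 1) = e by rewrite divfK // gt_eqF // addr_gt0.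
nra.
Qed.

Lemma Tfin z : dom Reg z -> exists t, T z = t%:E.
Proof.
case: hReg => hN _ _; rewrite /dom /T /Tik /=.
move: (hN z); case: (Reg z) => [r| |] // _ _; by exists ((2 * a)^-1 * `|g - A z| ^+ 2 + r).
Qed.

Lemma exist_min : exists z, Ralpha A Reg a g z.
Proof.
case: hReg => hN [z0 hz0] _.
set m := ereal_inf [set T z | z in dom Reg].
have mz0 : (m <= T z0)%E by apply: ereal_inf_lbound; exists z0.
have [t0 Et0] := Tfin hz0.
have inf_lt y : (m < y%:E)%E -> exists z, dom Reg z /\ (T z < y%:E)%E.
  by move=> /ereal_inf_lt [_ [z dz <-] hz]; exists z.
have minim p : dom Reg p -> (T p <= m)%E -> exists z, Ralpha A Reg a g z.
  move=> dp hp; exists p; split => // z dz; apply: le_trans hp _.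
  by apply: ereal_inf_lbound; exists z.
case Em: m => [mr| |].
- have ne : forall d, 0 < d -> exists z, dom Reg z /\ (T z < (mr + Order.min d 1)%:E)%E.
    by move=> d d0; apply: (inf_lt); rewrite Em lte_fin ltrDl lt_min d0 ltr01.
  have bd : forall d, 0 < d -> mr + Order.min d 1 <= t0 + 1.
    move=> d d0; rewrite Em Et0 lee_fin in mz0.
    have : Order.min d 1 <= 1 by rewrite ge_min lexx orbT.
    lra.
  have mo : forall d1 d2, 0 < d1 -> d1 <= d2 -> mr + Order.min d1 1 <= mr + Order.min d2 1.
    move=> d1 d2 d10 d12; rewrite lerD2l le_min !ge_min d12 lexx /=.
    by rewrite orbT.
  have [p [dp hp]] := exist_gen ne bd mo.
  have [tp Etp] := Tfin dp.
  apply: (minim p dp); rewrite Em Etp lee_fin; apply/ler_addgt0Pr => e e0.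
  have := hp e e0; rewrite Etp lee_fin => h; apply: le_trans h _.
  by rewrite lerD2l ge_min lexx.
- by move: mz0; rewrite Em Et0 leye_eq.
- have ne : forall d, 0 < d -> exists z, dom Reg z /\ (T z < (- d^-1)%:E)%E.
    by move=> d d0; apply: (inf_lt); rewrite Em; exact: ltNyr.
  have bd : forall d : R, 0 < d -> - d^-1 <= 0.
    move=> d d0; rewrite oppr_le0 invr_ge0 ltW //.
  have mo : forall d1 d2 : R, 0 < d1 -> d1 <= d2 -> - d1^-1 <= - d2^-1.
    move=> d1 d2 d10 d12; rewrite lerN2 lef_pV2 // ?posrE //.
    exact: lt_le_trans d12.
  have [p [dp hp]] := exist_gen ne bd mo.
  have [tp Etp] := Tfin dp.
  have d0 : 0 < (`|tp| + 1)^-1 by rewrite invr_gt0 ltr_pwDr // normr_ge0.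
  have := hp _ d0; rewrite Etp lee_fin invrK => h.
  have := ler_norm tp; have : - `|tp| <= tp by rewrite lerNl -normrN ler_norm.
  lra.
Qed.
End Exist.

Section Final.
Variables (R : realType) (X : tvsType R) (Reg : X -> \bar R)
  (Y : normedModType R) (ip : Y -> Y -> R) (A : {linear X -> Y}) (x : X).
Hypothesis hip : hilbert_inner ip.
Hypothesis hReg : proper_convex Reg.

Lemma sub_fin w : adj_subgrad ip A Reg x w -> exists r, Reg x = r%:E.
Proof.
case: hReg => hN [z0 hz0] _ H; have := H z0.
move: (hN x); case: (Reg x) => [r| |] // _; first by exists r.
rewrite addye // leye_eq => /eqP h; by rewrite h in hz0.
Qed.

Lemma om_w w b xb : adj_subgrad ip A Reg x w -> 0 < b -> Ralpha A Reg b (A x) xb ->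
  `|b^-1 *: (A x - A xb)| <= `|w| /\
  `|b^-1 *: (A x - A xb) - w| ^+ 2 <= `|w| ^+ 2 - `|b^-1 *: (A x - A xb)| ^+ 2.
Proof.
move=> Hw b0 hb; have [r Er] := sub_fin Hw.
have [rb Eb] : exists rb, Reg xb = rb%:E.
  case: hReg => hN _ _; move: (hN xb) hb.1; rewrite /dom /=.
  case: (Reg xb) => [s| |] // _ _; by exists s.
have h := mono hip Eb Er (optim hip hReg b0 hb) Hw.
set u := b^-1 *: (A x - A xb) in h *.
have e : A xb - A x = 0 *: w - b *: u.
  rewrite scale0r sub0r /u scalerA mulfV ?gt_eqF // scale1r opprB //.
rewrite e in h; exact: (@pair_ineq R Y ip hip _ _ _ _ (lexx 0) b0 h).
Qed.
End Final.

Unset Implicit Arguments.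
Set Strict Implicit.
Theorem proposition4p1 (R : realType)
  (X : tvsType R) (hausX : hausdorff_space X)
  (nX : X -> R) (hnX : banach_norm nX)
  (Reg : X -> \bar R) (hReg : proper_convex Reg)
  (hcpt : forall c : R, compact [set x : X | (Reg x <= c%:E)%E])
  (Y : completeNormedModType R) (ip : Y -> Y -> R) (hip : hilbert_inner ip)
  (A : {linear X -> Y})
  (hAcont : forall v : Y, continuous (fun x : X => ip (A x) v))
  (x : X)
  (hx : Reg x = ereal_inf [set Reg z | z in [set z : X | A z = A x]]) :
  rho1 A Reg x = ereal_inf [set (`|w|)%:E | w in [set w : Y | adj_subgrad ip A Reg x w]]
  /\ (rho1 A Reg x \is a fin_num ->
      forall xa : R -> X, (forall alpha : R, 0 < alpha -> Ralpha A Reg alpha (A x) (xa alpha)) ->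
      exists w : Y,
        [/\ adj_subgrad ip A Reg x w, (`|w|)%:E = rho1 A Reg x,
            (forall w' : Y, adj_subgrad ip A Reg x w' -> (`|w'|)%:E = rho1 A Reg x -> w' = w) &
            (forall v : Y,
               (fun alpha : R => ip (alpha^-1 *: (A x - A (xa alpha))) v) @ 0^'+ --> ip w v)]).
Proof.
have P2 : forall w, adj_subgrad ip A Reg x w -> (rho1 A Reg x <= (`|w|)%:E)%E.
  move=> w Hw; apply/ereal_supP => _ [b [xb [b0 hb ->]]].
  have [h _] := om_w hip hReg Hw b0 hb.
  have bi : 0 < b^-1 by rewrite invr_gt0.
  by rewrite lee_fin -(gtr0_norm bi) -normrZ.
have P1 : (rho1 A Reg x <= ereal_inf [set (`|w|)%:E | w in [set w : Y | adj_subgrad ip A Reg x w]])%E.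
  by apply/ereal_infP => _ [w hw <-]; exact: P2.
have bnd : forall r xs, rho1 A Reg x = r%:E ->
    (forall a : R, 0 < a -> Ralpha A Reg a (A x) (xs a)) ->
    forall a : R, 0 < a -> `|om A x xs a| <= r.
  move=> r xs Er hxs a a0; rewrite -lee_fin -Er /om normrZ gtr0_norm ?invr_gt0 //.
  apply: ereal_sup_ubound; exists a, (xs a); split => //; exact: hxs.
have wle : forall r xs (hxs : forall a : R, 0 < a -> Ralpha A Reg a (A x) (xs a))
    (Er : rho1 A Reg x = r%:E),
    `|w_lim A x xs| <= r.
  move=> r xs hxs Er.
  apply: (cvgr_to_le (cvg_norm (hom hip hReg hxs (bnd r xs Er hxs)))).
  apply/near0P; exists 1 => // t /andP[t0 _]; exact: bnd.
split.
  apply/eqP; rewrite eq_le P1 andTb.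
  have [xs hxs] : exists xs : R -> X, forall a : R, 0 < a -> Ralpha A Reg a (A x) (xs a).
    have : forall a : R, exists z, 0 < a -> Ralpha A Reg a (A x) z.
      move=> a; have [a0|a0] := ltP 0 a.
        by have [z hz] := exist_min hip hausX hReg hcpt hAcont (A x) a0; exists z.
      by exists x.
    by move/choice => [f hf]; exists f.
  case Er: (rho1 A Reg x) => [r| |].
  - apply: le_trans (_ : (`|w_lim A x xs|)%:E <= r%:E)%E; last by rewrite lee_fin; exact: wle.
    apply: ereal_inf_lbound; exists (w_lim A x xs) => //.
    exact: sub_w hip hReg hcpt hAcont hx hxs (bnd r xs Er hxs).
  - exact: leey.
  - have : ((1^-1 * `|A x - A (xs 1)|)%:E <= rho1 A Reg x)%E.
      apply: ereal_sup_ubound; exists 1, (xs 1); split; [exact: ltr01|exact: hxs ltr01|by []].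
    by rewrite Er leeNy_eq.
move=> fin xa hxa.
have Er : rho1 A Reg x = (fine (rho1 A Reg x))%:E by rewrite fineK.
set r := fine (rho1 A Reg x) in Er.
have hr := bnd r xa Er hxa.
have Hw := sub_w hip hReg hcpt hAcont hx hxa hr.
have hw := hom hip hReg hxa hr.
have wr : `|w_lim A x xa| = r.
  apply/eqP; rewrite eq_le (wle r xa hxa Er) /= -lee_fin -Er; exact: P2.
exists (w_lim A x xa); split => //.
- by rewrite wr Er.
- move=> w' Hw' nw'.
  have nw : `|w'| = `|w_lim A x xa| by rewrite wr; apply/EFin_inj; rewrite nw'.
  have cv : (fun t => `|om A x xa t - w'| ^+ 2 + `|om A x xa t| ^+ 2) @ 0^'+ -->
      `|w_lim A x xa - w'| ^+ 2 + `|w_lim A x xa| ^+ 2.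
    apply: cvgD; rewrite expr2.
      under eq_fun do rewrite expr2.
      apply: cvgM; apply: cvg_norm; apply: cvgB => //; exact: cvg_cst.
    under eq_fun do rewrite expr2.
    by apply: cvgM; apply: cvg_norm.
  have H : \forall t \near 0^'+, `|om A x xa t - w'| ^+ 2 + `|om A x xa t| ^+ 2 <= `|w'| ^+ 2.
    apply/near0P; exists 1 => // t /andP[t0 _].
    have [_ h] := om_w hip hReg Hw' t0 (hxa t t0).
    rewrite /om; lra.
  have := cvgr_to_le cv H; move=> /(_ (at_right_proper_filter 0)); rewrite nw => h.
  have : `|w_lim A x xa - w'| ^+ 2 <= 0 by lra.
  move=> h1.
  have : `|w_lim A x xa - w'| ^+ 2 == 0 by rewrite eq_le h1 exprn_ge0.
  by rewrite sqrf_eq0 normr_eq0 subr_eq0 => /eqP ->.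
- by move=> v; exact: (@cvg_ip R Y ip hip R _ _ _ _ v hw).
Qed.
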